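(* Let $\ell\ge 1$ be an integer and let $D_{2m}=\langle u,v : u^m=e=v^2,\ vu=u^{m-1}v\rangle$ denote the dihedral group of order $2m$. Let $(a_1,\dots,a_{2\ell})$ be a graceful permutation of length $2\ell$ with sequence of absolute differences $(b_1,\dots,b_{2\ell-1})$, and let $(c_1,\dots,c_{2\ell+1})$ be a graceful permutation of length $2\ell+1$ with sequence of absolute differences $(d_1,\dots,d_{2\ell})$. Then: 1. if $a_{2\ell}=\ell$, then $D_{8\ell+2}$ has a sequencing with first element $u^{b_1}$; 2. if $a_1=\ell$ and $a_{2\ell}=\ell-1$, then $D_{8\ell+2}$ has a sequencing with first element $u^{b_1}$ and a sequencing with first element $u^{b_{2\ell-1}}$; 3. if $c_1=\ell$ and $c_{2\ell+1}=\ell-1$, then $D_{8\ell+6}$ has a sequencing with first element $u^{d_1}$ and a sequencing with first element $u^{d_{2\ell}}$.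
   Context: A graceful permutation of length $n$ is an arrangement $(a_1,\dots,a_n)$ of the integers $\{0,1,\dots,n-1\}$ such that its sequence of absolute differences $(|a_2-a_1|,|a_3-a_2|,\dots,|a_n-a_{n-1}|)$ consists of the integers $\{1,\dots,n-1\}$. A sequencing of a finite group $G$ with identity $e$ is an ordering $(g_1,\dots,g_{|G|-1})$ of the elements of $G\setminus\{e\}$ such that the partial products $e, g_1, g_1g_2,\dots,g_1\cdots g_{|G|-1}$ are pairwise distinct. *)

(* Defs.v *)
From mathcomp Require Import all_boot all_order all_algebra.
Set Implicit Arguments. Unset Strict Implicit. Unset Printing Implicit Defensive.
Import GRing.Theory.

Definition absdiff (x y : nat) : nat := (x - y) + (y - x).

Definition absdiffs (a : seq nat) : seq nat :=
  [seq absdiff (nth 0 a i.+1) (nth 0 a i) | i <- iota 0 (size a).-1].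

Definition graceful (n : nat) (a : seq nat) : bool :=
  perm_eq a (iota 0 n) && perm_eq (absdiffs a) (iota 1 n.-1).

(* Dihedral group D_{2m} of order 2m, m >= 2, realized as Z_m x| Z_2:
   the pair (i, s) stands for u^i v^s (u of order m, v^2 = e, vu = u^{m-1}v). *)
Definition dihedral (m : nat) := ('Z_m * bool)%type.

Definition dmul (m : nat) (x y : dihedral m) : dihedral m :=
  ((if x.2 then x.1 - y.1 else x.1 + y.1)%R, x.2 (+) y.2).

Definition dunit (m : nat) : dihedral m := (0%R, false).

Definition du (m k : nat) : dihedral m := (k%:R%R, false).

Definition is_sequencing (T : finType) (mul : T -> T -> T) (e : T) (g : seq T) : bool :=
  perm_eq g (enum [pred x : T | x != e]) && uniq (e :: scanl mul e g).

Definition has_sequencing_from (T : finType) (mul : T -> T -> T) (e x : T) : Prop :=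
  exists g : seq T, is_sequencing mul e (x :: g).

(* Main.v *)
Require Import Defs.
From mathcomp Require Import all_boot all_order all_algebra zify ring.
Set Implicit Arguments. Unset Strict Implicit. Unset Printing Implicit Defensive.
Import GRing.Theory.

Ltac splitif1 := match goal with |- context [if ?b then _ else _] =>
   lazymatch b with context [if _ then _ else _] => fail | _ => let E := fresh "E" in case E: b end end.
Ltac splitifs := repeat (splitif1; rewrite /=).
Ltac fin_pair := first [ (exfalso; lia) | (apply/pair_equal_spec; split; [lia | reflexivity]) ].

Definition qv (m : nat) (s : bool) (x y : nat) : nat :=
  if s then (if y <= x then x - y else x + m - y) else (if x <= y then y - x else y + m - x).
Definition qcode m (p q : nat * bool) : nat * bool := (qv m p.2 p.1 q.1, p.2 (+) q.2).

Lemma qv_lt m s x y : x < m -> y < m -> qv m s x y < m.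
Proof. rewrite /qv; case: s; case: ifP; lia. Qed.

Lemma qcode0 m p q : p.1 < m -> q.1 < m -> qcode m p q = (0, false) -> p = q.
Proof.
case: p q => [x s] [y t] /= Hx Hy; rewrite /qcode /qv /=.
case=> E1 E2; have Est : s = t by case: s t E1 E2 => [] [].
subst t; congr pair; move: E1; clear E2; case: s; case: ifP; lia.
Qed.

Lemma pairmap_iota (T U : Type) (f : T -> T -> U) (h : nat -> T) k n :
  pairmap f (h k) [seq h t | t <- iota k.+1 n] = [seq f (h t) (h t.+1) | t <- iota k n].
Proof. by elim: n k => [|n IH] k //=; rewrite IH. Qed.

Section Bridge.
Variable m : nat.
Hypothesis m_gt1 : 1 < m.
Local Open Scope ring_scope.

Definition sgz (s : bool) (z : 'Z_m) : 'Z_m := if s then - z else z.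
Definition emb (s : bool) (p : nat * bool) : dihedral m := (sgz s (p.1)%:R, p.2).
Definition dinv (x : dihedral m) : dihedral m := if x.2 then x else (- x.1, false).

Lemma dmulA : associative (@dmul m).
Proof.
case=> a s [b t] [c u]; rewrite /dmul /=.
congr pair; last by rewrite addbA.
by case: s; case: t => /=; ring.
Qed.

Lemma dinvK x : dmul (dinv x) x = dunit m.
Proof. case: x => a [] ; rewrite /dmul /dinv /dunit /=; congr pair; ring. Qed.

Lemma dmul1 x : dmul (dunit m) x = x.
Proof. case: x => a s; rewrite /dmul /dunit /=; congr pair; ring. Qed.

Lemma dmul_inj x : injective (@dmul m x).
Proof.
move=> y z E. by rewrite -(dmul1 y) -(dmul1 z) -(dinvK x) -!dmulA E.
Qed.

Lemma natZp_inj (x y : nat) : (x < m)%N -> (y < m)%N -> (x%:R : 'Z_m) = y%:R -> x = y.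
Proof.
move=> Hx Hy E. have := congr1 (fun z : 'Z_m => nat_of_ord z) E. rewrite /= !val_Zp_nat // !modn_small //.
Qed.

Lemma emb_inj s p q : (p.1 < m)%N -> (q.1 < m)%N -> emb s p = emb s q -> p = q.
Proof.
case: p q => [x b] [y c] /= Hx Hy; rewrite /emb /sgz /=; case=> E1 ->.
congr pair; apply: natZp_inj => //. by case: s E1 => // /oppr_inj.
Qed.

Lemma qv_nat s x y : (x < m)%N -> (y < m)%N ->
  ((qv m s x y)%:R : 'Z_m) = if s then x%:R - y%:R else y%:R - x%:R.
Proof.
move=> Hx Hy; rewrite /qv; case: s; case: ifP => H.
- by rewrite natrB.
- rewrite natrB; last by lia. by rewrite natrD pchar_Zp // addr0.
- by rewrite natrB.
- rewrite natrB; last by lia. by rewrite natrD pchar_Zp // addr0.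
Qed.

Lemma emb_q s p q : (p.1 < m)%N -> (q.1 < m)%N ->
  dmul (emb s p) (emb s (qcode m p q)) = emb s q.
Proof.
case: p q => [x b] [y c] /= Hx Hy; rewrite /emb /qcode /dmul /=.
rewrite qv_nat //; congr pair; last by case: b; case: c.
by case: b; case: s; rewrite /sgz /=; ring.
Qed.

Lemma scan_emb s y p rest : (p.1 < m)%N -> all (fun q => q.1 < m)%N rest ->
  scanl (@dmul m) (dmul y (emb s p)) (map (emb s) (pairmap (qcode m) p rest))
  = map (fun q => dmul y (emb s q)) rest.
Proof.
elim: rest p => [|q rest IH] p //= Hp /andP [Hq Hr].
by rewrite -dmulA emb_q // IH.
Qed.

Lemma card_dihedral : #|{: dihedral m}| = (2 * m)%N.
Proof. rewrite card_prod card_bool card_ord Zp_cast //; lia. Qed.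

Lemma bridge s (h : nat -> nat * bool) :
  (forall t, (t < 2 * m)%N -> ((h t).1 < m)%N) ->
  (forall t t', (t < 2 * m)%N -> (t' < 2 * m)%N -> h t = h t' -> t = t') ->
  (forall t t', (t < (2 * m).-1)%N -> (t' < (2 * m).-1)%N ->
     qcode m (h t) (h t.+1) = qcode m (h t') (h t'.+1) -> t = t') ->
  has_sequencing_from (@dmul m) (dunit m) (emb s (qcode m (h 0%N) (h 1%N))).
Proof.
move=> Hb Hh Hq.
pose N := (2 * m).-2.
have EN : (2 * m).-1 = N.+1 by rewrite /N; lia.
exists (map (emb s) [seq qcode m (h t) (h t.+1) | t <- iota 1 N]).
set Ql := emb s _ :: _.
have EQl : Ql = map (emb s) [seq qcode m (h t) (h t.+1) | t <- iota 0 N.+1] by [].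
have EQl2 : Ql = map (emb s) (pairmap (qcode m) (h 0%N) [seq h t | t <- iota 1 N.+1]).
  by rewrite EQl -pairmap_iota.
have Hball : all (fun q => q.1 < m)%N [seq h t | t <- iota 1 N.+1].
  apply/allP => q /mapP [t]; rewrite mem_iota => /andP [_ Ht] ->; apply: Hb; lia.
apply/andP; split.
- have uQ : uniq Ql.
    rewrite EQl -map_comp map_inj_in_uniq ?iota_uniq //.
    move=> t t'; rewrite !mem_iota => /andP [_ Ht] /andP [_ Ht'] /= E.
    apply: Hq; try lia. apply: (emb_inj (s := s)) => //; apply: qv_lt; apply: Hb; lia.
  have sub : {subset Ql <= enum [pred x : dihedral m | x != dunit m]}.
    move=> x; rewrite EQl => /mapP [q /mapP [t]]; rewrite mem_iota => /andP [_ Ht] -> ->.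
    rewrite mem_enum inE; apply/eqP => E.
    have E0 : qcode m (h t) (h t.+1) = (0%N, false).
      apply: (emb_inj (s := s)); [by apply: qv_lt; apply: Hb; lia | by rewrite /=; lia | ].
      by rewrite E /emb /sgz /dunit; case: (s); rewrite /= ?oppr0.
    have := qcode0 (Hb t _) (Hb t.+1 _) E0. move=> /(_ ltac:(lia) ltac:(lia)) /Hh. lia.
  have Hsz : (size (enum [pred x : dihedral m | x != dunit m]) <= size Ql)%N.
    rewrite -cardE cardC1 card_dihedral // EQl !size_map size_iota; lia.
  have [_ eqm] := uniq_min_size uQ sub Hsz.
  by apply: uniq_perm => //; apply: enum_uniq.
- set y := dinv (emb s (h 0%N)).
  have Ey : dunit m = dmul y (emb s (h 0%N)) by rewrite dinvK.
  rewrite EQl2 Ey scan_emb //; last by apply: Hb; lia.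
  rewrite -map_comp.
  have E2 : (2 * m = N.+2)%N by rewrite /N; lia.
  suff : uniq [seq dmul y (emb s (h t)) | t <- iota 0 (2 * m)] by rewrite E2.
  rewrite map_inj_in_uniq ?iota_uniq //.
  move=> t t'; rewrite !mem_iota => /andP [_ Ht] /andP [_ Ht'] /= /dmul_inj E.
  apply: Hh => //; apply: (emb_inj (s := s)) => //; apply: Hb; lia.
Qed.
End Bridge.

Definition up m (a : seq nat) i := qv m false (nth 0 a i) (nth 0 a i.+1).
Definition dnB m (a : seq nat) X := qv m false (nth 0 a X) (nth 0 a X.-1).

Section Grace.
Variables (n m : nat) (a : seq nat).
Hypothesis Hm : m = (2 * n).+1.
Hypothesis Hbd : forall i, i < n -> nth 0 a i < n.
Hypothesis Hinj : forall i j, i < n -> j < n -> nth 0 a i = nth 0 a j -> i = j.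
Hypothesis Had : forall i j, i < n.-1 -> j < n.-1 ->
  absdiff (nth 0 a i.+1) (nth 0 a i) = absdiff (nth 0 a j.+1) (nth 0 a j) -> i = j.

Lemma up_inj i j : i < n.-1 -> j < n.-1 -> up m a i = up m a j -> i = j.
Proof.
move=> Hi Hj; rewrite /up /qv => E; apply: Had => //.
have := (@Hbd i); have := (@Hbd i.+1); have := (@Hbd j); have := (@Hbd j.+1).
move: E; rewrite /absdiff; (repeat case: ifP); lia.
Qed.

Lemma dnB_inj X Y : 0 < X < n -> 0 < Y < n -> dnB m a X = dnB m a Y -> X = Y.
Proof.
move=> HX HY; rewrite /dnB /qv => E.
suff : X.-1 = Y.-1 by lia.
apply: Had; try lia. rewrite !prednK; try lia.
have := (@Hbd X); have := (@Hbd X.-1); have := (@Hbd Y); have := (@Hbd Y.-1).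
move: E; rewrite /absdiff; (repeat case: ifP); lia.
Qed.

Lemma up_dnB i X : i < n.-1 -> 0 < X < n -> up m a i = dnB m a X -> False.
Proof.
move=> Hi HX; rewrite /up /dnB /qv => E.
have E1 : i = X.-1.
  apply: Had; try lia. rewrite prednK; last lia.
  have := (@Hbd i); have := (@Hbd i.+1); have := (@Hbd X); have := (@Hbd X.-1).
  move: E; rewrite /absdiff; (repeat case: ifP); lia.
subst i; move: E; rewrite prednK; last lia.
have := Hinj (i := X) (j := X.-1); have := (@Hbd X); have := (@Hbd X.-1).
(repeat case: ifP); lia.
Qed.

Lemma up_rng i : i < n.-1 -> (0 < up m a i < n) \/ (n.+1 < up m a i < m).
Proof.
move=> Hi; rewrite /up /qv.
have := Hinj (i := i) (j := i.+1); have := (@Hbd i); have := (@Hbd i.+1).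
(repeat case: ifP); lia.
Qed.

Lemma dnB_rng X : 0 < X < n -> (0 < dnB m a X < n) \/ (n.+1 < dnB m a X < m).
Proof.
move=> HX; rewrite /dnB /qv.
have := Hinj (i := X) (j := X.-1); have := (@Hbd X); have := (@Hbd X.-1).
(repeat case: ifP); lia.
Qed.
End Grace.

Lemma absdiffs_nth (a : seq nat) i : i < (size a).-1 ->
  nth 0 (absdiffs a) i = absdiff (nth 0 a i.+1) (nth 0 a i).
Proof.
move=> Hi; rewrite /absdiffs (nth_map 0) ?size_iota // nth_iota //.
Qed.

Lemma size_absdiffs (a : seq nat) : size (absdiffs a) = (size a).-1.
Proof. by rewrite /absdiffs size_map size_iota. Qed.

Lemma graceful_facts n a : graceful n a ->
  [/\ size a = n,
      forall i, i < n -> nth 0 a i < n,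
      forall i j, i < n -> j < n -> nth 0 a i = nth 0 a j -> i = j
    & forall i j, i < n.-1 -> j < n.-1 ->
      absdiff (nth 0 a i.+1) (nth 0 a i) = absdiff (nth 0 a j.+1) (nth 0 a j) -> i = j].
Proof.
case/andP => P1 P2.
have Hs : size a = n by rewrite (perm_size P1) size_iota.
have Ua : uniq a by rewrite (perm_uniq P1) iota_uniq.
have Ub : uniq (absdiffs a) by rewrite (perm_uniq P2) iota_uniq.
split => //.
- move=> i Hi. have : nth 0 a i \in iota 0 n by rewrite -(perm_mem P1) mem_nth // Hs.
  by rewrite mem_iota.
- move=> i j Hi Hj E. apply/eqP; rewrite -(nth_uniq 0 _ _ Ua) ?Hs // E //.
- move=> i j Hi Hj E. apply/eqP.
  rewrite -(nth_uniq 0 _ _ Ub) ?size_absdiffs ?Hs // !absdiffs_nth ?Hs // E //.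
Qed.


Section Case1.
Variables (l : nat) (a : seq nat).
Hypothesis Hl : 0 < l.
Let n := 2 * l.
Let m := (4 * l).+1.
Hypothesis Hbd : forall i, i < n -> nth 0 a i < n.
Hypothesis Hinj : forall i j, i < n -> j < n -> nth 0 a i = nth 0 a j -> i = j.
Hypothesis Had : forall i j, i < n.-1 -> j < n.-1 ->
  absdiff (nth 0 a i.+1) (nth 0 a i) = absdiff (nth 0 a j.+1) (nth 0 a j) -> i = j.
Hypothesis Hend : nth 0 a (2 * l).-1 = l.

Definition mid1 u : nat * bool :=
  if odd u then ((if u./2 < l then l - 1 - u./2 else 3 * l - u./2), true)
  else ((if u./2 <= l then 3 * l + u./2 else l - 1 + u./2), false).

Definition h1 t : nat * bool :=
  if t < 2 * l then (nth 0 a t, false)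
  else if t < 6 * l + 2 then mid1 (t - 2 * l)
  else (4 * l - nth 0 a (8 * l + 1 - t), true).

Lemma h1A t : t < 2 * l -> h1 t = (nth 0 a t, false).
Proof. by rewrite /h1 => ->. Qed.
Lemma h1M t : 2 * l <= t < 6 * l + 2 -> h1 t = mid1 (t - 2 * l).
Proof. move=> /andP [H1 H2]; rewrite /h1 H2 ifF //; lia. Qed.
Lemma h1B t : 6 * l + 2 <= t -> h1 t = (4 * l - nth 0 a (8 * l + 1 - t), true).
Proof. move=> H; rewrite /h1 ifF ?ifF //; lia. Qed.

Lemma mid1_bd u : u < 4 * l + 2 -> (mid1 u).1 < m.
Proof. rewrite /mid1 /m; splitifs => /=; lia. Qed.

Lemma mid1_inj u u' : u < 4 * l + 2 -> u' < 4 * l + 2 -> mid1 u = mid1 u' -> u = u'.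
Proof. move=> Hu Hu'; rewrite /mid1; splitifs; case; lia. Qed.

Lemma mid1_R u : u < 4 * l + 2 -> (mid1 u).2 = false -> 2 * l <= (mid1 u).1.
Proof. rewrite /mid1; splitifs => /=; lia. Qed.
Lemma mid1_F u : u < 4 * l + 2 -> (mid1 u).2 = true -> (mid1 u).1 <= 2 * l.
Proof. rewrite /mid1; splitifs => /=; lia. Qed.

Lemma h1_bd t : t < 2 * m -> (h1 t).1 < m.
Proof.
move=> Ht; case: (ltnP t (2 * l)) => H1; first by rewrite h1A //= /m; have := @Hbd t; lia.
case: (ltnP t (6 * l + 2)) => H2; first by rewrite h1M ?H1 ?H2 //; apply: mid1_bd; lia.
by rewrite h1B //= /m; lia.
Qed.

Lemma mid1_cases u : u < 4 * l + 2 ->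
  exists x b, mid1 u = (x, b) /\ (if b then x <= 2 * l else 2 * l <= x < m).
Proof. move=> Hu; exists (mid1 u).1, (mid1 u).2; split; first by case: (mid1 u).
rewrite /mid1 /m; case Ho: (odd u) => /=; splitifs => /=; lia. Qed.

Ltac rng1 t := let H1 := fresh "H" in let H2 := fresh "H" in
  case: (ltnP t (2 * l)) => H1;
  [ rewrite (h1A H1) | case: (ltnP t (6 * l + 2)) => H2;
    [ rewrite (@h1M t ltac:(apply/andP; split; done)) | rewrite (h1B H2) ] ].

Lemma h1_inj t t' : t < 2 * m -> t' < 2 * m -> h1 t = h1 t' -> t = t'.
Proof.
rewrite /m => Ht Ht'.
have := @Hbd t; have := @Hbd (8 * l + 1 - t); have := @Hbd t'; have := @Hbd (8 * l + 1 - t').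
move=> B1 B2 B3 B4.
rng1 t; rng1 t'.
- case=> E; apply: Hinj => //.
- have [x [b [-> Hx]]] := @mid1_cases (t' - 2 * l) ltac:(lia). case=> Ex Eb; subst b; lia.
- by [].
- have [x [b [-> Hx]]] := @mid1_cases (t - 2 * l) ltac:(lia). case=> Ex Eb; subst b; lia.
- move/mid1_inj; lia.
- have [x [b [-> Hx]]] := @mid1_cases (t - 2 * l) ltac:(lia). case=> Ex Eb; subst b; lia.
- by [].
- have [x [b [-> Hx]]] := @mid1_cases (t' - 2 * l) ltac:(lia). case=> Ex Eb; subst b; lia.
- case=> E. have := @Hinj (8 * l + 1 - t) (8 * l + 1 - t'). lia.
Qed.

Definition qfM u : nat :=
  if u < 2 * l then 2 * l - u else if u == 2 * l then 2 * l + 1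
  else if u == 2 * l + 1 then 0 else 6 * l + 2 - u.
Definition qfR t : nat :=
  if t < 2 * l - 1 then up m a t else if t == 2 * l - 1 then 2 * l
  else if t == 6 * l + 1 then 2 * l + 1 else dnB m a (8 * l + 1 - t).
Definition qf1 t : nat * bool :=
  if (2 * l <= t) && (t < 6 * l + 1) then (qfM (t - 2 * l), true) else (qfR t, false).

Lemma midq1 u : u < 4 * l + 1 -> qcode m (mid1 u) (mid1 u.+1) = qf1 (u + 2 * l).
Proof.
move=> Hu; rewrite /qcode /mid1 /qf1 /qfM /qv /m.
case Ho: (odd u); case Ho': (odd u.+1) => /=; try (exfalso; move: Ho Ho' => /=; lia).
all: splitifs; fin_pair.
Qed.

Lemma q1 t : t < (2 * m).-1 -> qcode m (h1 t) (h1 t.+1) = qf1 t.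
Proof.
rewrite /m => Ht.
case: (ltnP t (2 * l - 1)) => H1.
  rewrite !h1A; try lia. rewrite /qf1 /qfR /up /qcode /qv /=; splitifs; fin_pair.
case: (ltnP t (2 * l)) => H2.
  have Et : t = (2 * l).-1 by lia.
  rewrite h1A // h1M; last lia. rewrite Et Hend.
  have -> : (2 * l).-1.+1 - 2 * l = 0 by lia.
  rewrite /qcode /qv /mid1 /qf1 /qfR /qfM /=; splitifs; fin_pair.
case: (ltnP t (6 * l + 1)) => H3.
  rewrite !h1M; try lia. have -> : t.+1 - 2 * l = (t - 2 * l).+1 by lia.
  rewrite midq1; last lia. congr qf1; lia.
case: (ltnP t (6 * l + 2)) => H4.
  have Et : t = 6 * l + 1 by lia.
  rewrite h1M; last lia. rewrite h1B; last lia.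
  have -> : 8 * l + 1 - t.+1 = (2 * l).-1 by lia.
  rewrite Hend Et.
  have -> : 6 * l + 1 - 2 * l = 4 * l + 1 by lia.
  rewrite /qcode /qv /mid1 /qf1 /qfR /qfM /=; splitifs; fin_pair.
rewrite !h1B; try lia.
rewrite /qf1 ifF; last lia. rewrite /qfR !ifF; try lia.
have := @Hbd (8 * l + 1 - t); have := @Hbd (8 * l + 1 - t.+1).
rewrite /qcode /dnB /qv subnS /= => B1 B2; apply/pair_equal_spec; split => //; splitifs; lia.
Qed.

Lemma qfM_inj u u' : u < 4 * l + 1 -> u' < 4 * l + 1 -> qfM u = qfM u' -> u = u'.
Proof. rewrite /qfM => Hu Hu'; splitifs; lia. Qed.

Lemma qfR_inj t t' : t < (2 * m).-1 -> t' < (2 * m).-1 ->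
  ~~ ((2 * l <= t) && (t < 6 * l + 1)) -> ~~ ((2 * l <= t') && (t' < 6 * l + 1)) ->
  qfR t = qfR t' -> t = t'.
Proof.
rewrite /m => Ht Ht' Nt Nt'.
have Hm : m = (2 * n).+1 by rewrite /m /n; lia.
have U := @up_inj _ _ _ Hm Hbd Had.
have D := @dnB_inj _ _ _ Hm Hbd Had.
have UD := @up_dnB _ _ _ Hm Hbd Hinj Had.
have UR := @up_rng _ _ _ Hm Hbd Hinj.
have DR := @dnB_rng _ _ _ Hm Hbd Hinj.
rewrite /m /n in U D UD UR DR.
rewrite /qfR /m.
case H1: (t < 2 * l - 1); case H1': (t' < 2 * l - 1).
- by apply: U; lia.
- move=> E; exfalso. move: E.
  case H2: (t' == 2 * l - 1) => E; first by have := UR t ltac:(lia); lia.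
  case H3: (t' == 6 * l + 1) E => E; first by have := UR t ltac:(lia); lia.
  apply: (UD t (8 * l + 1 - t')); lia.
- move=> E; exfalso. move: E.
  case H2: (t == 2 * l - 1) => E; first by have := UR t' ltac:(lia); lia.
  case H3: (t == 6 * l + 1) E => E; first by have := UR t' ltac:(lia); lia.
  apply: (UD t' (8 * l + 1 - t)); lia.
case H2: (t == 2 * l - 1); case H2': (t' == 2 * l - 1).
- lia.
- case H3: (t' == 6 * l + 1); first lia. move=> E; have := DR (8 * l + 1 - t') ltac:(lia); lia.
- case H3: (t == 6 * l + 1); first lia. move=> E; have := DR (8 * l + 1 - t) ltac:(lia); lia.
case H3: (t == 6 * l + 1); case H3': (t' == 6 * l + 1).
- lia.
- move=> E; have := DR (8 * l + 1 - t') ltac:(lia); lia.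
- move=> E; have := DR (8 * l + 1 - t) ltac:(lia); lia.
move=> E; have := D (8 * l + 1 - t) (8 * l + 1 - t') ltac:(lia) ltac:(lia) E; lia.
Qed.

Lemma qf1_inj t t' : t < (2 * m).-1 -> t' < (2 * m).-1 -> qf1 t = qf1 t' -> t = t'.
Proof.
move=> Ht Ht'; rewrite /qf1.
case: ifP => H1; case: ifP => H1' //.
- case=> /qfM_inj E. have := E ltac:(rewrite /m in Ht; lia) ltac:(rewrite /m in Ht'; lia). lia.
- case=> E; apply: qfR_inj => //; by rewrite ?H1 ?H1'.
Qed.
End Case1.


Section Case3.
Variables (l : nat) (a : seq nat) (s e c1 c2 J : nat) (mid qm : nat -> nat * bool).
Hypothesis Hl : 0 < l.
Let n := (2 * l).+1.
Let m := (4 * l).+3.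
Hypothesis Hbd : forall i, i < n -> nth 0 a i < n.
Hypothesis Hinj : forall i j, i < n -> j < n -> nth 0 a i = nth 0 a j -> i = j.
Hypothesis Had : forall i j, i < n.-1 -> j < n.-1 ->
  absdiff (nth 0 a i.+1) (nth 0 a i) = absdiff (nth 0 a j.+1) (nth 0 a j) -> i = j.
Hypothesis Hs : nth 0 a 0 = s.
Hypothesis He : nth 0 a (2 * l) = e.
Hypothesis Hc1 : c1 = 3 * l + 1 - s.
Hypothesis HJ : J = 4 * l + 2 - 2 * e.
Hypothesis Hc12 : (c1 = 2 * l + 1 /\ c2 = 2 * l + 2) \/ (c1 = 2 * l + 2 /\ c2 = 2 * l + 1).
Hypothesis mid_bd : forall w, w < 4 * l + 4 -> (mid w).1 < m.
Hypothesis mid_inj : forall w w', w < 4 * l + 4 -> w' < 4 * l + 4 -> mid w = mid w' -> w = w'.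
Hypothesis mid_R : forall w, w < 4 * l + 4 -> (mid w).2 = false -> n <= (mid w).1.
Hypothesis mid_F : forall w, w < 4 * l + 4 -> (mid w).2 = true -> (mid w).1 <= n.
Hypothesis mid0 : mid 0 = (l + 1, true).
Hypothesis midq : forall w, w < 4 * l + 3 -> qcode m (mid w) (mid w.+1) = qm w.
Hypothesis qm_inj : forall w w', w < 4 * l + 3 -> w' < 4 * l + 3 -> qm w = qm w' -> w = w'.
Hypothesis qm_rot : forall w v, w < 4 * l + 3 -> qm w = (v, false) -> v = c2.
Hypothesis qm_J : forall w, w < 4 * l + 3 -> qm w <> (J, true).

Definition h3 t : nat * bool :=
  if t < 2 * l + 1 then (nth 0 a t, false)
  else if t < 4 * l + 2 then (4 * l + 2 - nth 0 a (4 * l + 1 - t), true)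
  else mid (t - (4 * l + 2)).

Definition qfR3 t : nat :=
  if t < 2 * l then up m a t else if t == 4 * l + 1 then c1 else dnB m a (4 * l + 1 - t).

Definition qf3 t : nat * bool :=
  if t == 2 * l then (J, true) else if 4 * l + 2 <= t then qm (t - (4 * l + 2))
  else (qfR3 t, false).

Lemma h3_bd t : t < 2 * m -> (h3 t).1 < m.
Proof.
rewrite /h3 /m => Ht; case: ifP => H1; first by have := @Hbd t; rewrite /=; lia.
case: ifP => H2; first by rewrite /=; lia.
apply: mid_bd; lia.
Qed.

Lemma mid_cases w : w < 4 * l + 4 ->
  exists x b, mid w = (x, b) /\ (if b then x <= n else n <= x < m).
Proof.
move=> Hw; exists (mid w).1, (mid w).2; split; first by case: (mid w).
have := mid_bd Hw; have := @mid_R w Hw; have := @mid_F w Hw.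
case: (mid w).2; lia.
Qed.

Lemma h3_inj t t' : t < 2 * m -> t' < 2 * m -> h3 t = h3 t' -> t = t'.
Proof.
rewrite /m => Ht Ht'.
have := @Hbd t; have := @Hbd (4 * l + 1 - t); have := @Hbd t'; have := @Hbd (4 * l + 1 - t').
move=> B1 B2 B3 B4.
rewrite /h3.
case H1: (t < 2 * l + 1); case H1': (t' < 2 * l + 1).
- case=> E; apply: Hinj => //; rewrite /n; lia.
- case H2': (t' < 4 * l + 2); first by [].
  have [x [b [-> Hx]]] := @mid_cases (t' - (4 * l + 2)) ltac:(lia). case=> Ex Eb; subst b; rewrite /n /m in Hx; lia.
- case H2: (t < 4 * l + 2); first by [].
  have [x [b [-> Hx]]] := @mid_cases (t - (4 * l + 2)) ltac:(lia). case=> Ex Eb; subst b; rewrite /n /m in Hx; lia.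
case H2: (t < 4 * l + 2); case H2': (t' < 4 * l + 2).
- case=> E. have := @Hinj (4 * l + 1 - t) (4 * l + 1 - t'); rewrite /n; lia.
- have [x [b [-> Hx]]] := @mid_cases (t' - (4 * l + 2)) ltac:(lia). case=> Ex Eb; subst b; rewrite /n /m in Hx; lia.
- have [x [b [-> Hx]]] := @mid_cases (t - (4 * l + 2)) ltac:(lia). case=> Ex Eb; subst b; rewrite /n /m in Hx; lia.
move/mid_inj; lia.
Qed.

Lemma h3A t : t < 2 * l + 1 -> h3 t = (nth 0 a t, false).
Proof. by rewrite /h3 => ->. Qed.
Lemma h3B t : 2 * l + 1 <= t < 4 * l + 2 -> h3 t = (4 * l + 2 - nth 0 a (4 * l + 1 - t), true).
Proof. move=> /andP [H1 H2]; rewrite /h3 H2 ifF //; lia. Qed.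
Lemma h3M t : 4 * l + 2 <= t -> h3 t = mid (t - (4 * l + 2)).
Proof. move=> H; rewrite /h3 !ifF //; lia. Qed.

Lemma q3 t : t < (2 * m).-1 -> qcode m (h3 t) (h3 t.+1) = qf3 t.
Proof.
rewrite /m => Ht.
case: (ltnP t (2 * l)) => H1.
  rewrite !h3A; try lia. rewrite /qf3 /qfR3 ifF; last lia. rewrite ifF; last lia. rewrite H1 //.
case: (ltnP t (2 * l + 1)) => H2.
  have Et : t = 2 * l by lia. subst t.
  rewrite h3A; last lia. rewrite h3B; last lia. rewrite /qf3 eqxx He.
  have -> : 4 * l + 1 - (2 * l).+1 = 2 * l by lia. rewrite He.
  have := @Hbd (2 * l); rewrite He /n => Be.
  rewrite /qcode /qv /=; splitifs; fin_pair.
case: (ltnP t (4 * l + 1)) => H3.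
  rewrite !h3B; try lia.
  rewrite /qf3 /qfR3 ifF; last lia. rewrite ifF; last lia. rewrite ifF; last lia. rewrite ifF; last lia.
  have := @Hbd (4 * l + 1 - t); have := @Hbd (4 * l + 1 - t.+1).
  rewrite /qcode /dnB /qv subnS /n /= => B1 B2; apply/pair_equal_spec; split => //; splitifs; lia.
case: (ltnP t (4 * l + 2)) => H4.
  have Et : t = 4 * l + 1 by lia. subst t.
  rewrite h3B; last lia. rewrite h3M; last lia.
  have -> : (4 * l + 1).+1 - (4 * l + 2) = 0 by lia.
  have -> : 4 * l + 1 - (4 * l + 1) = 0 by lia.
  rewrite mid0 Hs.
  have := @Hbd 0; rewrite Hs /n => Bs.
  rewrite /qf3 /qfR3 /qcode /qv /=; splitifs; fin_pair.
rewrite !h3M; try lia.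
have -> : t.+1 - (4 * l + 2) = (t - (4 * l + 2)).+1 by lia.
rewrite midq; last lia.
rewrite /qf3 ifF; last lia. rewrite ifT //; lia.
Qed.

Section Facts.
Let Hm : m = (2 * n).+1. Proof. rewrite /m /n; lia. Qed.
Let U := @up_inj _ _ _ Hm Hbd Had.
Let D := @dnB_inj _ _ _ Hm Hbd Had.
Let UD := @up_dnB _ _ _ Hm Hbd Hinj Had.
Let UR := @up_rng _ _ _ Hm Hbd Hinj.
Let DR := @dnB_rng _ _ _ Hm Hbd Hinj.

Lemma qfR3_c2 t : t < 4 * l + 2 -> t != 2 * l -> qfR3 t <> c2.
Proof.
move=> Ht Ht2; rewrite /qfR3 /m.
have UR1 := @UR t; have DR1 := @DR (4 * l + 1 - t). rewrite /n /m in UR1 DR1.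
case: ifP => H1; first by have := UR1 ltac:(lia); lia.
case: ifP => H2; first lia.
have := DR1 ltac:(lia); lia.
Qed.

Lemma qfR3_inj t t' : t < 4 * l + 2 -> t' < 4 * l + 2 -> t != 2 * l -> t' != 2 * l ->
  qfR3 t = qfR3 t' -> t = t'.
Proof.
move=> Ht Ht' N N'.
rewrite /qfR3 /m.
case H1: (t < 2 * l); case H1': (t' < 2 * l).
- by apply: U; rewrite /n; lia.
- move=> E; exfalso. move: E.
  case H2: (t' == 4 * l + 1) => E; first by have := @UR t ltac:(rewrite /n; lia); rewrite /n /m; lia.
  apply: (@UD t (4 * l + 1 - t')) => //; rewrite /n; lia.
- move=> E; exfalso. move: E.
  case H2: (t == 4 * l + 1) => E; first by have := @UR t' ltac:(rewrite /n; lia); rewrite /n /m; lia.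
  apply: (@UD t' (4 * l + 1 - t)) => //; rewrite /n; lia.
case H2: (t == 4 * l + 1); case H2': (t' == 4 * l + 1).
- lia.
- move=> E; have := @DR (4 * l + 1 - t') ltac:(rewrite /n; lia); rewrite /n /m; lia.
- move=> E; have := @DR (4 * l + 1 - t) ltac:(rewrite /n; lia); rewrite /n /m; lia.
move=> E; have := @D (4 * l + 1 - t) (4 * l + 1 - t') ltac:(rewrite /n; lia) ltac:(rewrite /n; lia) E; lia.
Qed.
End Facts.

Lemma qf3_inj t t' : t < (2 * m).-1 -> t' < (2 * m).-1 -> qf3 t = qf3 t' -> t = t'.
Proof.
rewrite /m => Ht Ht'; rewrite /qf3.
case H1: (t == 2 * l); case H1': (t' == 2 * l).
- lia.
- case H2': (4 * l + 2 <= t') => // E; exfalso; apply: (qm_J (w := t' - (4 * l + 2))); [lia | by rewrite -E].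
- case H2: (4 * l + 2 <= t) => // E; exfalso; apply: (qm_J (w := t - (4 * l + 2))); [lia | by rewrite E].
case H2: (4 * l + 2 <= t); case H2': (4 * l + 2 <= t').
- move/qm_inj; lia.
- move=> E; have := qm_rot (w := t - (4 * l + 2)) ltac:(lia) E => E2.
  exfalso; apply: (@qfR3_c2 t'); by [lia | rewrite H1' | ].
- move=> E; have := qm_rot (w := t' - (4 * l + 2)) ltac:(lia) (esym E) => E2.
  exfalso; apply: (@qfR3_c2 t); by [lia | rewrite H1 | ].
case=> E; apply: qfR3_inj => //; try lia; by rewrite ?H1 ?H1'.
Qed.
End Case3.


Section Part1.
Variable l : nat.
Hypothesis Hl : 0 < l.

Definition midP1 w : nat * bool :=
  if w == 0 then (l + 1, true)
  else if w < 2 * l + 4 then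
    (if odd (w - 1) then (l - (w - 1)./2, true) else (3 * l + 1 + (w - 1)./2, false))
  else if w == 2 * l + 4 then (2 * l + 1, false)
  else (if odd (w - (2 * l + 5)) then (2 * l + 2 + (w - (2 * l + 5))./2, false)
        else (2 * l + 1 - (w - (2 * l + 5))./2, true)).

Definition qmP1 w : nat * bool :=
  if w < 2 * l + 3 then (2 * l + 3 - w, true)
  else if w == 2 * l + 3 then (2 * l + 2, false)
  else if w == 2 * l + 4 then (0, true)
  else (6 * l + 7 - w, true).

Lemma P1_bd w : w < 4 * l + 4 -> (midP1 w).1 < (4 * l).+3.
Proof. rewrite /midP1 => Hw; splitifs; lia. Qed.

Lemma P1_R w : w < 4 * l + 4 -> (midP1 w).2 = false -> (2 * l).+1 <= (midP1 w).1.
Proof. rewrite /midP1 => Hw; splitifs; lia. Qed.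

Lemma P1_F w : w < 4 * l + 4 -> (midP1 w).2 = true -> (midP1 w).1 <= (2 * l).+1.
Proof. rewrite /midP1 => Hw; splitifs; lia. Qed.

Lemma P1_inj w w' : w < 4 * l + 4 -> w' < 4 * l + 4 -> midP1 w = midP1 w' -> w = w'.
Proof.
rewrite /midP1 => Hw Hw'; splitifs; move=> /pair_equal_spec [Ea Eb]; first [discriminate | lia].
Qed.

Lemma P1_q w : w < 4 * l + 3 -> qcode (4 * l).+3 (midP1 w) (midP1 w.+1) = qmP1 w.
Proof. rewrite /midP1 /qmP1 /qcode /qv => Hw; splitifs; fin_pair. Qed.

Lemma P1_qinj w w' : w < 4 * l + 3 -> w' < 4 * l + 3 -> qmP1 w = qmP1 w' -> w = w'.
Proof.
rewrite /qmP1 => Hw Hw'; splitifs; move=> /pair_equal_spec [Ea Eb]; first [discriminate | lia].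
Qed.

Lemma P1_rot w v : w < 4 * l + 3 -> qmP1 w = (v, false) -> v = 2 * l + 2.
Proof. rewrite /qmP1 => Hw; splitifs; move=> /pair_equal_spec [Ea Eb]; first [discriminate | lia]. Qed.

Lemma P1_J w : w < 4 * l + 3 -> qmP1 w <> (4 * l + 2 - 2 * l.-1, true).
Proof. rewrite /qmP1 => Hw; splitifs; move=> /pair_equal_spec [Ea Eb]; first [discriminate | lia]. Qed.
Lemma P1_mid0 : midP1 0 = (l + 1, true).
Proof. by []. Qed.
End Part1.


Section Part2.
Variable l : nat.
Hypothesis Hl : 0 < l.

Definition midP2 w : nat * bool :=
  if w == 0 then (l + 1, true)
  else if w < 2 * l + 2 then
    (if odd (w - 1) then (l + 2 + (w - 1)./2, true) else (3 * l + 1 - (w - 1)./2, false))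
  else if w == 2 * l + 2 then (4 * l + 2, false)
  else (if odd (w - (2 * l + 3)) then (4 * l + 1 - (w - (2 * l + 3))./2, false)
        else ((w - (2 * l + 3))./2, true)).

Definition qmP2 w : nat * bool :=
  if w < 2 * l then (w + 2 * l + 3, true)
  else if w == 2 * l then (0, true)
  else if w == 2 * l + 1 then (2 * l + 1, false)
  else (w - 2 * l - 1, true).

Lemma P2_bd w : w < 4 * l + 4 -> (midP2 w).1 < (4 * l).+3.
Proof. rewrite /midP2 => Hw; splitifs; lia. Qed.

Lemma P2_R w : w < 4 * l + 4 -> (midP2 w).2 = false -> (2 * l).+1 <= (midP2 w).1.
Proof. rewrite /midP2 => Hw; splitifs; lia. Qed.

Lemma P2_F w : w < 4 * l + 4 -> (midP2 w).2 = true -> (midP2 w).1 <= (2 * l).+1.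
Proof. rewrite /midP2 => Hw; splitifs; lia. Qed.

Lemma P2_inj w w' : w < 4 * l + 4 -> w' < 4 * l + 4 -> midP2 w = midP2 w' -> w = w'.
Proof.
rewrite /midP2 => Hw Hw'; splitifs; move=> /pair_equal_spec [Ea Eb]; first [discriminate | lia].
Qed.

Lemma P2_q w : w < 4 * l + 3 -> qcode (4 * l).+3 (midP2 w) (midP2 w.+1) = qmP2 w.
Proof. rewrite /midP2 /qmP2 /qcode /qv => Hw; splitifs; fin_pair. Qed.

Lemma P2_qinj w w' : w < 4 * l + 3 -> w' < 4 * l + 3 -> qmP2 w = qmP2 w' -> w = w'.
Proof.
rewrite /qmP2 => Hw Hw'; splitifs; move=> /pair_equal_spec [Ea Eb]; first [discriminate | lia].
Qed.

Lemma P2_rot w v : w < 4 * l + 3 -> qmP2 w = (v, false) -> v = 2 * l + 1.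
Proof. rewrite /qmP2 => Hw; splitifs; move=> /pair_equal_spec [Ea Eb]; first [discriminate | lia]. Qed.

Lemma P2_J w : w < 4 * l + 3 -> qmP2 w <> (4 * l + 2 - 2 * l, true).
Proof. rewrite /qmP2 => Hw; splitifs; move=> /pair_equal_spec [Ea Eb]; first [discriminate | lia]. Qed.
Lemma P2_mid0 : midP2 0 = (l + 1, true).
Proof. by []. Qed.
End Part2.

Definition gfacts n (a : seq nat) :=
  [/\ size a = n,
      forall i, i < n -> nth 0 a i < n,
      forall i j, i < n -> j < n -> nth 0 a i = nth 0 a j -> i = j
    & forall i j, i < n.-1 -> j < n.-1 ->
      absdiff (nth 0 a i.+1) (nth 0 a i) = absdiff (nth 0 a j.+1) (nth 0 a j) -> i = j].

Lemma first_el m x y : 1 < m -> x < m -> y < m ->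
  exists s, emb m s (qv m false x y, false) = du m (absdiff y x).
Proof.
move=> Hm Hx Hy; exists (y < x); rewrite /emb /du /sgz; congr pair.
rewrite qv_nat // /absdiff; case: ltnP => H /=.
- have -> : y - x = 0 by lia. rewrite add0n opprB -natrB //; lia.
- have -> : x - y = 0 by lia. rewrite addn0 -natrB //.
Qed.

Lemma main1 l a : 0 < l -> gfacts (2 * l) a -> nth 0 a (2 * l).-1 = l ->
  has_sequencing_from (@dmul (4 * l).+1) (dunit _) (du _ (absdiff (nth 0 a 1) (nth 0 a 0))).
Proof.
move=> Hl [Hs Hbd Hinj Had] Hend.
have [s Es] := @first_el (4 * l).+1 (nth 0 a 0) (nth 0 a 1) ltac:(lia)
   ltac:(have := Hbd 0 ltac:(lia); lia) ltac:(have := Hbd 1 ltac:(lia); lia).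
rewrite -Es.
have -> : (qv (4 * l).+1 false (nth 0 a 0) (nth 0 a 1), false) = qcode (4 * l).+1 (h1 l a 0) (h1 l a 1).
  by rewrite !h1A //; lia.
apply: bridge; first lia.
- move=> t Ht; exact: h1_bd.
- move=> t t' Ht Ht'; exact: h1_inj.
- move=> t t' Ht Ht'; rewrite !q1 //; exact: qf1_inj.
Qed.

Lemma main3a l a : 0 < l -> gfacts (2 * l).+1 a -> nth 0 a 0 = l -> nth 0 a (2 * l) = l.-1 ->
  has_sequencing_from (@dmul (4 * l).+3) (dunit _) (du _ (absdiff (nth 0 a 1) (nth 0 a 0))).
Proof.
move=> Hl [Hs Hbd Hinj Had] H0 Hend.
have [s Es] := @first_el (4 * l).+3 (nth 0 a 0) (nth 0 a 1) ltac:(lia)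
   ltac:(have := Hbd 0 ltac:(lia); lia) ltac:(have := Hbd 1 ltac:(lia); lia).
rewrite -Es.
have -> : (qv (4 * l).+3 false (nth 0 a 0) (nth 0 a 1), false) =
    qcode (4 * l).+3 (h3 l a (midP1 l) 0) (h3 l a (midP1 l) 1).
  by rewrite !h3A //; lia.
have Hc12 : (3 * l + 1 - l = 2 * l + 1 /\ 2 * l + 2 = 2 * l + 2) \/
            (3 * l + 1 - l = 2 * l + 2 /\ 2 * l + 2 = 2 * l + 1) by lia.
apply: bridge; first lia.
- move=> t Ht; exact: (@h3_bd l a l l.-1 _ _ _ (midP1 l) Hl Hbd H0 Hend erefl erefl Hc12 (P1_bd Hl)).
- move=> t t' Ht Ht'; exact: (@h3_inj l a l l.-1 _ _ _ (midP1 l) Hl Hbd Hinj H0 Hend erefl erefl Hc12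
     (P1_bd Hl) (P1_inj Hl) (P1_R Hl) (P1_F Hl)).
- move=> t t' Ht Ht'.
  rewrite !(@q3 l a l l.-1 _ _ _ (midP1 l) (qmP1 l) Hl Hbd H0 Hend erefl erefl Hc12 (P1_mid0 l) (P1_q Hl)) //.
  exact: (@qf3_inj l a l l.-1 _ _ _ (qmP1 l) Hl Hbd Hinj Had H0 Hend erefl erefl Hc12
     (P1_qinj Hl) (P1_rot Hl) (P1_J Hl)).
Qed.

Lemma main3b l a : 0 < l -> gfacts (2 * l).+1 a -> nth 0 a 0 = l.-1 -> nth 0 a (2 * l) = l ->
  has_sequencing_from (@dmul (4 * l).+3) (dunit _) (du _ (absdiff (nth 0 a 1) (nth 0 a 0))).
Proof.
move=> Hl [Hs Hbd Hinj Had] H0 Hend.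
have [s Es] := @first_el (4 * l).+3 (nth 0 a 0) (nth 0 a 1) ltac:(lia)
   ltac:(have := Hbd 0 ltac:(lia); lia) ltac:(have := Hbd 1 ltac:(lia); lia).
rewrite -Es.
have -> : (qv (4 * l).+3 false (nth 0 a 0) (nth 0 a 1), false) =
    qcode (4 * l).+3 (h3 l a (midP2 l) 0) (h3 l a (midP2 l) 1).
  by rewrite !h3A //; lia.
have Hc12 : (3 * l + 1 - l.-1 = 2 * l + 1 /\ 2 * l + 1 = 2 * l + 2) \/
            (3 * l + 1 - l.-1 = 2 * l + 2 /\ 2 * l + 1 = 2 * l + 1) by lia.
apply: bridge; first lia.
- move=> t Ht; exact: (@h3_bd l a l.-1 l _ _ _ (midP2 l) Hl Hbd H0 Hend erefl erefl Hc12 (P2_bd Hl)).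
- move=> t t' Ht Ht'; exact: (@h3_inj l a l.-1 l _ _ _ (midP2 l) Hl Hbd Hinj H0 Hend erefl erefl Hc12
     (P2_bd Hl) (P2_inj Hl) (P2_R Hl) (P2_F Hl)).
- move=> t t' Ht Ht'.
  rewrite !(@q3 l a l.-1 l _ _ _ (midP2 l) (qmP2 l) Hl Hbd H0 Hend erefl erefl Hc12 (P2_mid0 l) (P2_q Hl)) //.
  exact: (@qf3_inj l a l.-1 l _ _ _ (qmP2 l) Hl Hbd Hinj Had H0 Hend erefl erefl Hc12
     (P2_qinj Hl) (P2_rot Hl) (P2_J Hl)).
Qed.

Lemma gfacts_rev n a : gfacts n a -> gfacts n (rev a).
Proof.
case=> Hs Hbd Hinj Had; split.
- by rewrite size_rev.
- move=> i Hi; rewrite nth_rev Hs //; apply: Hbd; lia.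
- move=> i j Hi Hj; rewrite !nth_rev Hs // => /Hinj; lia.
- move=> i j Hi Hj; rewrite !nth_rev Hs; try lia.
  move=> E. have E' : absdiff (nth 0 a (n - i.+2).+1) (nth 0 a (n - i.+2)) =
                      absdiff (nth 0 a (n - j.+2).+1) (nth 0 a (n - j.+2)).
    have -> : (n - i.+2).+1 = n - i.+1 by lia.
    have -> : (n - j.+2).+1 = n - j.+1 by lia.
    move: E; rewrite /absdiff; lia.
  have := Had _ _ _ _ E'; lia.
Qed.

Lemma gfacts_compl n a : gfacts n a -> gfacts n (map (fun x => n.-1 - x) a).
Proof.
case=> Hs Hbd Hinj Had; split.
- by rewrite size_map.
- move=> i Hi; rewrite (nth_map 0) ?Hs //; lia.
- move=> i j Hi Hj; rewrite !(nth_map 0) ?Hs // => E; apply: Hinj => //.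
  have := Hbd i Hi; have := Hbd j Hj; lia.
- move=> i j Hi Hj; rewrite !(nth_map 0) ?Hs; try lia. move=> E; apply: Had => //.
  have := Hbd i ltac:(lia); have := Hbd j ltac:(lia); have := Hbd i.+1 ltac:(lia); have := Hbd j.+1 ltac:(lia).
  move: E; rewrite /absdiff; lia.
Qed.

Unset Implicit Arguments.

Theorem lemma4p8 (l : nat) (a c : seq nat) :
  1 <= l ->
  graceful (2 * l) a ->
  graceful (2 * l).+1 c ->
  let b := absdiffs a in
  let d := absdiffs c in
  [/\ nth 0 a (2 * l).-1 = l ->
        has_sequencing_from (@dmul (4 * l).+1) (dunit _) (du _ (nth 0 b 0)),
      nth 0 a 0 = l -> nth 0 a (2 * l).-1 = l.-1 ->
        has_sequencing_from (@dmul (4 * l).+1) (dunit _) (du _ (nth 0 b 0)) /\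
        has_sequencing_from (@dmul (4 * l).+1) (dunit _) (du _ (nth 0 b (2 * l).-2))
    & nth 0 c 0 = l -> nth 0 c (2 * l) = l.-1 ->
        has_sequencing_from (@dmul (4 * l).+3) (dunit _) (du _ (nth 0 d 0)) /\
        has_sequencing_from (@dmul (4 * l).+3) (dunit _) (du _ (nth 0 d (2 * l).-1))].
Proof.
move=> Hl Ga Gc b d.
have Fa : gfacts (2 * l) a by apply: graceful_facts.
have Fc : gfacts (2 * l).+1 c by apply: graceful_facts.
have [Sa Ba _ _] := Fa. have [Sc Bc _ _] := Fc.
have Eb : forall i, i < (2 * l).-1 -> nth 0 b i = absdiff (nth 0 a i.+1) (nth 0 a i).
  by move=> i Hi; rewrite /b absdiffs_nth // Sa.
have Ed : forall i, i < 2 * l -> nth 0 d i = absdiff (nth 0 c i.+1) (nth 0 c i).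
  by move=> i Hi; rewrite /d absdiffs_nth // Sc.
have Sym : forall x y, absdiff x y = absdiff y x by move=> x y; rewrite /absdiff addnC.
split.
- move=> Hend; rewrite Eb; last lia. exact: main1.
- move=> H0 Hend; split.
  + rewrite Eb; last lia.
    have := @main1 l (map (fun x => (2 * l).-1 - x) a) Hl (gfacts_compl Fa).
    rewrite !(nth_map 0) ?Sa; try lia. rewrite Hend => /(_ ltac:(lia)).
    have -> : absdiff ((2 * l).-1 - nth 0 a 1) ((2 * l).-1 - nth 0 a 0) = absdiff (nth 0 a 1) (nth 0 a 0).
      have := Ba 0 ltac:(lia); have := Ba 1 ltac:(lia); rewrite /absdiff; lia.
    by [].
  + rewrite Eb; last lia.
    have := @main1 l (rev a) Hl (gfacts_rev Fa).
    rewrite !nth_rev Sa; try lia.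
    have -> : 2 * l - (2 * l).-1.+1 = 0 by lia.
    rewrite H0 => /(_ erefl).
    have -> : 2 * l - 2 = (2 * l).-2 by lia.
    have -> : 2 * l - 1 = (2 * l).-2.+1 by lia.
    by rewrite Sym.
- move=> H0 Hend; split.
  + rewrite Ed; last lia. exact: main3a.
  + have E1 : nth 0 d (2 * l).-1 = absdiff (nth 0 c ((2 * l).+1 - 2)) (nth 0 c ((2 * l).+1 - 1)).
      rewrite Ed; last lia. rewrite Sym; congr absdiff; congr nth; lia.
    rewrite E1.
    have Ha : nth 0 (rev c) 0 = l.-1 by rewrite nth_rev Sc // subn1 /= Hend.
    have Hb : nth 0 (rev c) (2 * l) = l by rewrite nth_rev Sc // subnn H0.
    have R0 : nth 0 (rev c) 0 = nth 0 c ((2 * l).+1 - 1) by rewrite nth_rev Sc.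
    have R1 : nth 0 (rev c) 1 = nth 0 c ((2 * l).+1 - 2) by rewrite nth_rev Sc //; lia.
    have := @main3b l (rev c) Hl (gfacts_rev Fc) Ha Hb.
    by rewrite R0 R1.
Qed.
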